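(* A non-failed Boolean CSP is closed under the applications of (each of) the rules of the proof system BOOL if and only if it is hyper-arc consistent.
   Context: A Boolean CSP is $\langle \mathcal C; x_1\in D_1,\dots,x_n\in D_n\rangle$ with $D_i\subseteq\{0,1\}$ and $\mathcal C$ a finite set of Boolean constraints, each of one of the forms $u=v$ (relation $\{(0,0),(1,1)\}$), $\neg u=v$ ($\{(0,1),(1,0)\}$), $u\wedge v=w$ ($\{(0,0,0),(0,1,0),(1,0,0),(1,1,1)\}$), $u\vee v=w$ ($\{(0,0,0),(0,1,1),(1,0,1),(1,1,1)\}$) on distinct variables among $x_1,\dots,x_n$; each constraint is always understood as restricted to the current domains, i.e. intersected with the product of the domains of its variables. We write $x=d$ for $x\in\{d\}$. A CSP is failed if some domain is empty. A constraint is solved if it equals the product of the domains of its variables. A CSP $\phi$ is a reformulation of $\psi$ if removing the solved constraints from both yields the same CSP. The proof system BOOL consists of the rules (constraint, premise $\rightarrow$ conclusion; $x,y,z$ schematic): EQU1: $x=y$, $x=1\rightarrow y=1$; EQU2: $x=y$, $y=1\rightarrow x=1$; EQU3: $x=y$, $x=0\rightarrow y=0$; EQU4: $x=y$, $y=0\rightarrow x=0$; NOT1: $\neg x=y$, $x=1\rightarrow y=0$; NOT2: $\neg x=y$, $x=0\rightarrow y=1$; NOT3: $\neg x=y$, $y=1\rightarrow x=0$; NOT4: $\neg x=y$, $y=0\rightarrow x=1$; AND1: $x\wedge y=z$, $x=1,y=1\rightarrow z=1$; AND2: $x\wedge y=z$, $x=1,z=0\rightarrow y=0$; AND3: $x\wedge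 y=z$, $y=1,z=0\rightarrow x=0$; AND4: $x\wedge y=z$, $x=0\rightarrow z=0$; AND5: $x\wedge y=z$, $y=0\rightarrow z=0$; AND6: $x\wedge y=z$, $z=1\rightarrow x=1,y=1$; OR1: $x\vee y=z$, $x=1\rightarrow z=1$; OR2: $x\vee y=z$, $x=0,y=0\rightarrow z=0$; OR3: $x\vee y=z$, $x=0,z=1\rightarrow y=1$; OR4: $x\vee y=z$, $y=0,z=1\rightarrow x=1$; OR5: $x\vee y=z$, $y=1\rightarrow z=1$; OR6: $x\vee y=z$, $z=0\rightarrow x=0,y=0$. On CSPs, such a rule with constraint $c$, premise $X=s$ and conclusion $Y=t$ is the deterministic rule $\dfrac{\langle c;\ X=s,\ \text{other variables of } c \text{ in their domains}\rangle}{\langle \emptyset;\ X=s,\ \text{each } y_j\in Y \text{ with domain } D_{y_j}\cap\{t_j\},\ \text{other variables unchanged}\rangle}$. E.g. AND6 is $\dfrac{\langle x\wedge y=z;\ x\in D_x,y\in D_y,z=1\rangle}{\langle\emptyset;\ x\in D_x\cap\{1\},y\in D_y\cap\{1\},z=1\rangle}$. It can be applied to a CSP $\langle\mathcal C\cup\{c\};\mathcal D\cup\mathcal D_1\rangle$ where $\mathcal D_1$ matches its premise (the constraint $c$ instantiated by distinct variables, variables in $X$ having exactly the domains $\{s_i\}$); the result replaces $c$ and $\mathcal D_1$ by the conclusion's constraints and domain expressions. An application is relevant if its result is not a reformulation of the CSP it was applied to. A CSP is closed under the applications of a rule $R$ if either $R$ cannot be applied to it or no application of $R$ to it is relevant.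 A constraint $C$ is hyper-arc consistent if for every variable of $C$, each value in its domain participates in a solution to $C$ (a tuple of $C$ restricted to the current domains). A CSP is hyper-arc consistent if every constraint of it is. *)

(* Defs.v *)
From HB Require Import structures.
From mathcomp Require Import all_boot.
Set Implicit Arguments. Unset Strict Implicit. Unset Printing Implicit Defensive.

Section BoolCSP.
Variable n : nat.

(* Constraints: u = v, (not u) = v, u /\ v = w, u \/ v = w. *)
Inductive bcons : Type :=
  | CEq  of 'I_n & 'I_n
  | CNot of 'I_n & 'I_n
  | CAnd of 'I_n & 'I_n & 'I_n
  | COr  of 'I_n & 'I_n & 'I_n.

Definition bcons_enc (c : bcons) :
  (('I_n * 'I_n) + ('I_n * 'I_n)) + (('I_n * 'I_n * 'I_n) + ('I_n * 'I_n * 'I_n)) :=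
  match c with
  | CEq u v => inl (inl (u, v))
  | CNot u v => inl (inr (u, v))
  | CAnd u v w => inr (inl (u, v, w))
  | COr u v w => inr (inr (u, v, w))
  end.

Definition bcons_dec (e : (('I_n * 'I_n) + ('I_n * 'I_n)) +
                          (('I_n * 'I_n * 'I_n) + ('I_n * 'I_n * 'I_n))) : bcons :=
  match e with
  | inl (inl (u, v)) => CEq u v
  | inl (inr (u, v)) => CNot u v
  | inr (inl (u, v, w)) => CAnd u v w
  | inr (inr (u, v, w)) => COr u v w
  end.

Lemma bcons_encK : cancel bcons_enc bcons_dec.
Proof. by case. Qed.

HB.instance Definition _ := Finite.copy bcons (can_type bcons_encK).

Definition cvars (c : bcons) : seq 'I_n :=
  match c with
  | CEq u v | CNot u v => [:: u; v]
  | CAnd u v w | COr u v w => [:: u; v; w]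
  end.

Definition cfst (c : bcons) : 'I_n :=
  match c with CEq u _ | CNot u _ | CAnd u _ _ | COr u _ _ => u end.

Definition cvar (c : bcons) (k : nat) : 'I_n := nth (cfst c) (cvars c) k.

Definition csat (c : bcons) (f : 'I_n -> bool) : bool :=
  match c with
  | CEq u v => f u == f v
  | CNot u v => ~~ f u == f v
  | CAnd u v w => (f u && f v) == f w
  | COr u v w => (f u || f v) == f w
  end.

Record csp := CSP { ccons : {set bcons}; cdom : 'I_n -> {set bool} }.

Definition wf_csp (phi : csp) : Prop :=
  forall c, c \in ccons phi -> uniq (cvars c).

Definition failed (phi : csp) : Prop := exists x, cdom phi x = set0.

Definition in_doms (phi : csp) (c : bcons) (f : 'I_n -> bool) : Prop :=
  forall x, x \in cvars c -> f x \in cdom phi x.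

(* c is solved: (relation of c) /\ (product of domains) = product of domains *)
Definition solved (phi : csp) (c : bcons) : Prop :=
  forall f, in_doms phi c f -> csat c f.

(* phi is a reformulation of psi: removing the solved constraints from both
   yields the same CSP. *)
Definition reformulation (phi psi : csp) : Prop :=
  (forall x, cdom phi x = cdom psi x) /\
  (forall c, (c \in ccons phi /\ ~ solved phi c) <-> (c \in ccons psi /\ ~ solved psi c)).

Definition hac_cons (phi : csp) (c : bcons) : Prop :=
  forall x a, x \in cvars c -> a \in cdom phi x ->
    exists f, [/\ in_doms phi c f, csat c f & f x = a].

Definition hac (phi : csp) : Prop :=
  forall c, c \in ccons phi -> hac_cons phi c.

End BoolCSP.

Inductive ckind := KEq | KNot | KAnd | KOr.

Definition kind_of n (c : bcons n) : ckind :=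
  match c with CEq _ _ => KEq | CNot _ _ => KNot | CAnd _ _ _ => KAnd | COr _ _ _ => KOr end.

(* A rule: the form of its constraint, its premise and its conclusion, each a
   list of (position of schematic variable, value); positions 0,1,2 stand for
   the schematic variables x,y,z. *)
Record brule := BRule { rkind : ckind; rprem : seq (nat * bool); rconcl : seq (nat * bool) }.

Inductive rule_name :=
  | EQU1 | EQU2 | EQU3 | EQU4
  | NOT1 | NOT2 | NOT3 | NOT4
  | AND1 | AND2 | AND3 | AND4 | AND5 | AND6
  | OR1 | OR2 | OR3 | OR4 | OR5 | OR6.

Definition rule_of (r : rule_name) : brule :=
  match r with
  | EQU1 => BRule KEq [:: (0, true)] [:: (1, true)]
  | EQU2 => BRule KEq [:: (1, true)] [:: (0, true)]
  | EQU3 => BRule KEq [:: (0, false)] [:: (1, false)]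
  | EQU4 => BRule KEq [:: (1, false)] [:: (0, false)]
  | NOT1 => BRule KNot [:: (0, true)] [:: (1, false)]
  | NOT2 => BRule KNot [:: (0, false)] [:: (1, true)]
  | NOT3 => BRule KNot [:: (1, true)] [:: (0, false)]
  | NOT4 => BRule KNot [:: (1, false)] [:: (0, true)]
  | AND1 => BRule KAnd [:: (0, true); (1, true)] [:: (2, true)]
  | AND2 => BRule KAnd [:: (0, true); (2, false)] [:: (1, false)]
  | AND3 => BRule KAnd [:: (1, true); (2, false)] [:: (0, false)]
  | AND4 => BRule KAnd [:: (0, false)] [:: (2, false)]
  | AND5 => BRule KAnd [:: (1, false)] [:: (2, false)]
  | AND6 => BRule KAnd [:: (2, true)] [:: (0, true); (1, true)]
  | OR1 => BRule KOr [:: (0, true)] [:: (2, true)]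
  | OR2 => BRule KOr [:: (0, false); (1, false)] [:: (2, false)]
  | OR3 => BRule KOr [:: (0, false); (2, true)] [:: (1, true)]
  | OR4 => BRule KOr [:: (1, false); (2, true)] [:: (0, true)]
  | OR5 => BRule KOr [:: (1, true)] [:: (2, true)]
  | OR6 => BRule KOr [:: (2, false)] [:: (0, false); (1, false)]
  end.

Section Apply.
Variable n : nat.

Definition applicable (R : brule) (phi : csp n) (c : bcons n) : Prop :=
  [/\ c \in ccons phi, kind_of c = rkind R &
      forall ks, ks \in rprem R -> cdom phi (cvar c ks.1) = [set ks.2]].

(* The result: c is removed, each conclusion variable y gets D_y :&: {t}. *)
Definition apply_rule (R : brule) (phi : csp n) (c : bcons n) : csp n :=
  CSP (ccons phi :\ c)
      (fun x => cdom phi x :&: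
                [set b | all (fun kt : nat * bool => (cvar c kt.1 == x) ==> (b == kt.2))
                             (rconcl R)]).

Definition relevant (R : brule) (phi : csp n) (c : bcons n) : Prop :=
  ~ reformulation (apply_rule R phi c) phi.

Definition closed_under (phi : csp n) (R : brule) : Prop :=
  (~ exists c, applicable R phi c) \/
  (forall c, applicable R phi c -> ~ relevant R phi c).

End Apply.

(* Main.v *)
Require Import Defs.
From HB Require Import structures.
From mathcomp Require Import all_boot.
Set Implicit Arguments. Unset Strict Implicit. Unset Printing Implicit Defensive.

Definition tern k := match k with KAnd | KOr => true | _ => false end.
Definition lsat k (a b d : bool) := match k with
  | KEq => a == b | KNot => ~~ a == b | KAnd => (a && b) == d | KOr => (a || b) == d end.
Definition bools := [:: false; true].
Definition lall k (P : bool -> bool -> bool -> bool) :=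
  all (fun a => all (fun b => all (fun d => P a b d) (if tern k then bools else [:: a])) bools) bools.
Definition lex k (P : bool -> bool -> bool -> bool) :=
  has (fun a => has (fun b => has (fun d => P a b d) (if tern k then bools else [:: a])) bools) bools.

Lemma mem_bools b : b \in bools. Proof. by case: b. Qed.

Lemma lallP k P : lall k P <-> forall a b d, tern k || (d == a) -> P a b d.
Proof.
rewrite /lall; split.
- move/allP=> H a b d Hd; move/allP: (H a (mem_bools a)) => H2.
  move/allP: (H2 b (mem_bools b)) => H3; apply: H3.
  by case: (tern k) Hd => /= Hd; [exact: mem_bools | rewrite inE].
- move=> H; apply/allP=> a _; apply/allP => b _; apply/allP => d Hd; apply: H.
  by case: (tern k) Hd => //=; rewrite inE.
Qed.

Lemma lexP k P : lex k P <-> exists a b d, (tern k || (d == a)) /\ P a b d.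
Proof.
rewrite /lex; split.
- move/hasP=> [a _ /hasP [b _ /hasP [d Hd HP]]]; exists a, b, d; split => //.
  by case: (tern k) Hd => //=; rewrite inE.
- move=> [a [b [d [Hd HP]]]]; apply/hasP; exists a; first exact: mem_bools.
  apply/hasP; exists b; first exact: mem_bools.
  apply/hasP; exists d => //.
  by case: (tern k) Hd => /= Hd; [exact: mem_bools| rewrite inE].
Qed.

Definition lsolved k (M : nat -> bool -> bool) :=
  lall k (fun a b d => M 0 a ==> M 1 b ==> M 2 d ==> lsat k a b d).
Definition lhac k (M : nat -> bool -> bool) :=
  all (fun i => all (fun e => M i e ==> lex k (fun a b d =>
     [&& M 0 a, M 1 b, M 2 d, lsat k a b d & nth a [:: a; b; d] i == e])) bools) [:: 0; 1; 2].
Definition lprem (R : brule) (M : nat -> bool -> bool) :=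
  all (fun ks : nat * bool => M ks.1 ks.2 && ~~ M ks.1 (~~ ks.2)) (rprem R).
Definition lconcl (R : brule) (M : nat -> bool -> bool) :=
  all (fun kt : nat * bool => ~~ M kt.1 (~~ kt.2)) (rconcl R).

Definition rules_ok k (P : rule_name -> bool) := match k with
  | KEq => [&& P EQU1, P EQU2, P EQU3 & P EQU4]
  | KNot => [&& P NOT1, P NOT2, P NOT3 & P NOT4]
  | KAnd => [&& P AND1, P AND2, P AND3, P AND4, P AND5 & P AND6]
  | KOr => [&& P OR1, P OR2, P OR3, P OR4, P OR5 & P OR6] end.

Lemma rules_okP k (P : rule_name -> bool) :
  rules_ok k P <-> forall r, rkind (rule_of r) = k -> P r.
Proof.
split.
- case: k => /= H r; case: r => //= _;
   repeat (match goal with H0 : is_true (_ && _) |- _ => let a := fresh in let b := fresh in case/andP: H0 => a b end); assumption.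
- by case: k => H /=; rewrite ?H.
Qed.

Lemma local k (M : nat -> bool -> bool) :
  M 0 false || M 0 true -> M 1 false || M 1 true -> M 2 false || M 2 true ->
  (~~ tern k -> M 2 false = M 0 false /\ M 2 true = M 0 true) ->
  rules_ok k (fun r => lprem (rule_of r) M ==> lconcl (rule_of r) M && lsolved k M) = lhac k M.
Proof.
case: k => h0 h1 h2 hb; rewrite /lhac /lsolved /lprem /lconcl /lall /lex /=;
  try (have [e1 e2] := hb isT; rewrite ?e1 ?e2);
  move: h0 h1 h2; case: (M 0 false); case: (M 0 true); case: (M 1 false); case: (M 1 true);
  try (case: (M 2 false); case: (M 2 true)); by [].
Qed.

Section Bridge.
Variable n : nat.
Implicit Types (phi : csp n) (c : bcons n).

Definition Mc phi c i b := b \in cdom phi (cvar c i).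

Lemma cvars_size c : size (cvars c) <= 3. Proof. by case: c. Qed.
Lemma cvar2_bin c : ~~ tern (kind_of c) -> cvar c 2 = cvar c 0. Proof. by case: c. Qed.
Lemma cvar_in c i : i < 3 -> cvar c i \in cvars c.
Proof. by move=> Hi; case: c => *; case: i Hi => [|[|[|]]] //= _; rewrite !inE eqxx ?orbT. Qed.
Lemma in_cvars c x : x \in cvars c -> exists i, i < 3 /\ x = cvar c i.
Proof.
move=> Hx; exists (index x (cvars c)); split; last by rewrite /cvar nth_index.
by apply: leq_trans (cvars_size c); rewrite index_mem.
Qed.

Lemma csat_loc c f : csat c f = lsat (kind_of c) (f (cvar c 0)) (f (cvar c 1)) (f (cvar c 2)).
Proof. by case: c. Qed.

Lemma realize c a b d : uniq (cvars c) -> tern (kind_of c) || (d == a) ->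
  exists f : 'I_n -> bool, [/\ f (cvar c 0) = a, f (cvar c 1) = b & f (cvar c 2) = d].
Proof.
case: c => [u v|u v|u v w|u v w] /=; rewrite /cvar /=.
- rewrite inE andbT => Huv /eqP ->; exists (fun x => if x == u then a else b).
  by rewrite eqxx eq_sym (negbTE Huv).
- rewrite inE andbT => Huv /eqP ->; exists (fun x => if x == u then a else b).
  by rewrite eqxx eq_sym (negbTE Huv).
- rewrite !inE andbT negb_or => /andP [/andP [Huv Huw] Hvw] _.
  exists (fun x => if x == u then a else if x == v then b else d).
  by rewrite eqxx eq_sym (negbTE Huv) eqxx eq_sym (negbTE Huw) eq_sym (negbTE Hvw).
- rewrite !inE andbT negb_or => /andP [/andP [Huv Huw] Hvw] _.
  exists (fun x => if x == u then a else if x == v then b else d).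
  by rewrite eqxx eq_sym (negbTE Huv) eqxx eq_sym (negbTE Huw) eq_sym (negbTE Hvw).
Qed.

Lemma in_doms_loc phi c f : in_doms phi c f <->
  [&& Mc phi c 0 (f (cvar c 0)), Mc phi c 1 (f (cvar c 1)) & Mc phi c 2 (f (cvar c 2))].
Proof.
split.
- by move=> H; apply/and3P; split; apply: H; apply: cvar_in.
- move=> /and3P [h0 h1 h2] x /in_cvars [i [hi ->]].
  by case: i hi => [|[|[|]]].
Qed.

Lemma tern_cond c : tern (kind_of c) || (cvar c 2 == cvar c 0).
Proof. by case: c => * /=; rewrite ?eqxx. Qed.

Lemma solved_loc phi c : uniq (cvars c) ->
  solved phi c <-> lsolved (kind_of c) (Mc phi c).
Proof.
move=> Hu; split.
- move=> H; apply/lallP => a b d Hd.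
  have [f [f0 f1 f2]] := realize b Hu Hd.
  apply/implyP => h0; apply/implyP => h1; apply/implyP => h2.
  have := H f; rewrite csat_loc f0 f1 f2; apply.
  by apply/in_doms_loc; rewrite f0 f1 f2 h0 h1 h2.
- move/lallP => H f /in_doms_loc /and3P [h0 h1 h2]; rewrite csat_loc.
  have Hd : tern (kind_of c) || (f (cvar c 2) == f (cvar c 0)).
    by case/orP: (tern_cond c) => [->//|/eqP->]; rewrite eqxx orbT.
  by have := H _ (f (cvar c 1)) _ Hd; rewrite h0 h1 h2.
Qed.

Lemma hac_loc phi c : uniq (cvars c) ->
  hac_cons phi c <-> lhac (kind_of c) (Mc phi c).
Proof.
move=> Hu; split.
- move=> H; apply/allP => i Hi; apply/allP => e _; apply/implyP => He.
  have Hi3 : i < 3 by move: Hi; rewrite !inE => /or3P [] /eqP ->.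
  have [f [Hf Hs Hx]] := H _ _ (cvar_in c Hi3) He.
  apply/lexP; exists (f (cvar c 0)), (f (cvar c 1)), (f (cvar c 2)); split.
    by case/orP: (tern_cond c) => [->//|/eqP->]; rewrite eqxx orbT.
  move/in_doms_loc: Hf => /and3P [h0 h1 h2].
  rewrite h0 h1 h2 -csat_loc Hs /=.
  by move: Hi Hx; rewrite !inE => /or3P [] /eqP -> /= ->.
- move=> H x e /in_cvars [i [hi ->]] He.
  have Hi : i \in [:: 0; 1; 2] by case: i hi {He} => [|[|[|]]].
  move/allP: H => /(_ i Hi) /allP /(_ e (mem_bools e)) /implyP /(_ He) /lexP.
  move=> [a [b [d [Hd /and5P [h0 h1 h2 hs he]]]]].
  have [f [f0 f1 f2]] := realize b Hu Hd.
  exists f; split.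
  + by apply/in_doms_loc; rewrite f0 f1 f2 h0 h1 h2.
  + by rewrite csat_loc f0 f1 f2.
  + by case: i hi {He Hi} he => [|[|[|]]] // _ /eqP <-.
Qed.

Lemma set1_bool (D : {set bool}) s : (D = [set s]) <-> (s \in D) && (~~ s \notin D).
Proof.
split.
- by move=> ->; rewrite !inE eqxx; case: s.
- move=> /andP [h1 h2]; apply/setP => b; rewrite inE.
  by case: b; case: s h1 h2 => //= h1 h2; rewrite ?h1 ?(negbTE h2).
Qed.

Lemma applicable_loc (R : brule) phi c :
  applicable R phi c <-> [/\ c \in ccons phi, kind_of c = rkind R & lprem R (Mc phi c)].
Proof.
split.
- move=> [h1 h2 h3]; split => //; apply/allP => ks Hks.
  by have /set1_bool := h3 ks Hks.
- move=> [h1 h2 /allP h3]; split => // ks Hks; apply/set1_bool; exact: h3.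
Qed.

Lemma solved_ext phi psi c : (forall x, cdom phi x = cdom psi x) ->
  solved phi c <-> solved psi c.
Proof.
move=> E; rewrite /solved /in_doms; split => H f Hf; apply: H => x Hx.
  by rewrite E; apply: Hf.
by rewrite -E; apply: Hf.
Qed.

Lemma reform_loc (R : brule) phi c : c \in ccons phi -> uniq (cvars c) ->
  reformulation (apply_rule R phi c) phi <->
  lconcl R (Mc phi c) && lsolved (kind_of c) (Mc phi c).
Proof.
move=> Hc Hu; split.
- move=> [E1 E2]; apply/andP; split.
  + apply/allP => [[k t]] Hkt /=; apply/negP => Hin.
    have := E1 (cvar c k); move/setP => /(_ (~~ t)); rewrite /= !inE (Hin : ~~ t \in cdom phi (cvar c k)) /=.
    move/allP => /(_ _ Hkt) /=; rewrite eqxx /=; by case: t {Hkt Hin}.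
  + case Hs: (lsolved _ _) => //.
    have Hns : ~ solved phi c by move/(solved_loc phi Hu); rewrite Hs.
    have [_ H] := E2 c; have [] := H (conj Hc Hns).
    by rewrite /= !inE eqxx.
- move=> /andP [/allP Hcl Hs].
  have E : forall x, cdom (apply_rule R phi c) x = cdom phi x.
    move=> x; apply/setP => b; rewrite /= !inE.
    case Hb: (b \in cdom phi x) => //=; apply/allP => [[k t]] Hkt /=.
    apply/implyP => /eqP Hx; subst x.
    have := Hcl _ Hkt; rewrite /Mc /=.
    by case: b t Hb {Hkt} => [] [] // ->.
  split => // c'; have [s1 s2] := solved_ext c' E; rewrite /= !inE.
  have Hcs : solved phi c by apply/(solved_loc phi Hu).
  case: (eqVneq c' c) => [->|_] /=.
    by split => [[]|[_ []]].
  split => [[h1 h2]|[h1 h2]]; split => // hs; [exact: h2 (s2 hs)|exact: h2 (s1 hs)].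
Qed.

End Bridge.

Theorem theorem4 (n : nat) (phi : csp n) :
  wf_csp phi -> ~ failed phi ->
  ((forall r : rule_name, closed_under phi (rule_of r)) <-> hac phi).
Proof.
move=> Hwf Hnf.
have Hne : forall x, (false \in cdom phi x) || (true \in cdom phi x).
  move=> x; case/boolP: (cdom phi x == set0) => [/eqP H|/set0Pn [[] ->]]; rewrite ?orbT //.
  by case: Hnf; exists x.
have closedE : forall R, closed_under phi R <->
    (forall c, applicable R phi c -> ~ relevant R phi c).
  move=> R; split; first by case=> // H c Hc; case: H; exists c.
  by right.
have Hloc : forall c, c \in ccons phi ->
   (forall r, rkind (rule_of r) = kind_of c -> lprem (rule_of r) (Mc phi c) ->
      lconcl (rule_of r) (Mc phi c) && lsolved (kind_of c) (Mc phi c)) <-> hac_cons phi c.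
  move=> c Hc.
  have hb : ~~ tern (kind_of c) -> Mc phi c 2 false = Mc phi c 0 false /\ Mc phi c 2 true = Mc phi c 0 true.
    by move=> Hb; rewrite /Mc (cvar2_bin Hb).
  have L := local (Hne _) (Hne _) (Hne _) hb.
  split.
  - move=> H; apply/(hac_loc phi (Hwf c Hc)); rewrite -L.
    by apply/rules_okP => r Hr; apply/implyP; exact: H.
  - move/(hac_loc phi (Hwf c Hc)); rewrite -L; move/rules_okP => H r Hr Hp.
    exact: (implyP (H r Hr)) Hp.
split.
- move=> H c Hc; apply/(Hloc c Hc) => r Hr Hp.
  have /closedE Hcl := H r.
  have Ha : applicable (rule_of r) phi c by apply/applicable_loc.
  have := Hcl c Ha; rewrite /relevant.
  case Hb: (_ && _) => // Hn; case: Hn => Hrf.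
  by move: ((reform_loc (rule_of r) Hc (Hwf c Hc)).1 Hrf); rewrite Hb.
- move=> H r; apply/closedE => c /applicable_loc [Hc Hk Hp].
  have := (Hloc c Hc).2 (H c Hc) r (esym Hk) Hp.
  move=> Hb Hn; exact: Hn ((reform_loc (rule_of r) Hc (Hwf c Hc)).2 Hb).
Qed.
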